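(* Let $Q\subseteq M$ be nonempty, let $y\in Q$, and let $A_0=\max_{q\in Q}d(y,q)$; assume $A_0>0$ and let $i$ be the integer with $2^{i-1}<A_0\le 2^i$. Let $a\in M$ minimize $\max_{q\in Q}d(z,q)$ over $z\in M$. Let $y_i$ be the level-$i$ ancestor of $y$ and $a_{i-1}$ the level-$(i-1)$ ancestor of $a$. Then $a_{i-1}\in L_{y_i,i,6}$, i.e. $d(a_{i-1},y_i)\le 6\cdot 2^i$.
   Context: $(M,d)$ is a finite metric space with at least two points whose minimum interpoint distance is $1$; let $i_{\mathrm{top}}=\lceil\log_2\operatorname{diam}(M)\rceil$. Net hierarchy: $Y_0=M$, and for $i=1,\dots,i_{\mathrm{top}}$, $Y_i\subseteq Y_{i-1}$ is a $2^i$-net of $Y_{i-1}$, i.e. any two distinct points of $Y_i$ are at distance $\ge 2^i$ and every point of $Y_{i-1}$ is at distance $<2^i$ from some point of $Y_i$. By convention $Y_i=M$ for all integers $i<0$. The tree $T$ has nodes $(y,i)$ for integers $i\le i_{\mathrm{top}}$ and $y\in Y_i$. For $1\le i\le i_{\mathrm{top}}$, each node $(z,i-1)$ has as parent a node $(y,i)$ with $y\in Y_i$ and $d(y,z)\le 2^i$ (chosen to be $(z,i)$ when $z\in Y_i$). For $i\le 0$, the parent of $(x,i-1)$ is $(x,i)$. For $x\in M$ and an integer $l\le i_{\mathrm{top}}$, the level-$l$ ancestor of $x$ is the point $w\in Y_l$ such that $(w,l)$ is an ancestor of $(x,0)$ in $T$ if $l\ge0$, and is $x$ itself if $l<0$.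 For $y\in Y_i$ and $c\ge1$, $L_{y,i,c}=\{z\in Y_{i-1}: d(y,z)\le c\,2^i\}$. *)

(* Defs.v *)
From HB Require Import structures.
From mathcomp Require Import all_boot all_order all_algebra.
Set Implicit Arguments. Unset Strict Implicit. Unset Printing Implicit Defensive.
Import Order.TTheory GRing.Theory Num.Theory.
Local Open Scope ring_scope.

Definition pow2 {R : realFieldType} (i : int) : R := (2%:R : R) ^ i.

Definition is_metric {R : realFieldType} {T : finType} (d : T -> T -> R) : Prop :=
  [/\ (forall x y : T, d x y = 0 <-> x = y),
      (forall x y : T, d x y = d y x),
      (forall x y z : T, d x z <= d x y + d y z),
      (forall x y : T, x != y -> 1 <= d x y)
    & (exists x y : T, x != y /\ d x y = 1)].

Definition diam {R : realFieldType} {T : finType} (d : T -> T -> R) : R :=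
  \big[Num.max/0]_(x : T) \big[Num.max/0]_(y : T) d x y.

Definition is_itop {R : realFieldType} {T : finType} (d : T -> T -> R) (itop : int) : Prop :=
  pow2 (itop - 1) < diam d <= pow2 itop.

Definition is_net_hierarchy {R : realFieldType} {T : finType}
  (d : T -> T -> R) (itop : int) (Y : int -> {set T}) : Prop :=
  [/\ (forall i : int, i <= 0 -> Y i = [set: T]),
      (forall i : int, 1 <= i <= itop -> Y i \subset Y (i - 1)),
      (forall i : int, 1 <= i <= itop -> forall y z, y \in Y i -> z \in Y i ->
          y != z -> pow2 i <= d y z)
    & (forall i : int, 1 <= i <= itop -> forall z, z \in Y (i - 1) ->
          exists2 y, y \in Y i & d y z < pow2 i)].

(* Parent choice in the tree T: for 1 <= i <= itop, the parent of the node
   (z, i-1) is the node (par i z, i).  For i <= 0 the parent of (x,i-1) is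
   (x,i) by definition, so no choice is involved. *)
Definition is_parent_choice {R : realFieldType} {T : finType}
  (d : T -> T -> R) (itop : int) (Y : int -> {set T}) (par : int -> T -> T) : Prop :=
  forall i : int, 1 <= i <= itop -> forall z, z \in Y (i - 1) ->
    [/\ par i z \in Y i, d (par i z) z <= pow2 i & (z \in Y i -> par i z = z)].

Fixpoint ancn {T : finType} (par : int -> T -> T) (n : nat) (x : T) : T :=
  match n with
  | 0%N => x
  | n'.+1 => par (n'.+1 : int) (ancn par n' x)
  end.

Definition ancestor {T : finType} (par : int -> T -> T) (l : int) (x : T) : T :=
  if (l < 0)%R then x else ancn par `|l|%N x.

Definition Lset {R : realFieldType} {T : finType} (d : T -> T -> R)
  (Y : int -> {set T}) (y : T) (i : int) (c : R) : {set T} :=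
  [set z in Y (i - 1) | d y z <= c * pow2 i].

Definition radius {R : realFieldType} {T : finType} (d : T -> T -> R)
  (Q : {set T}) (z : T) : R :=
  \big[Num.max/0]_(q in Q) d z q.

(* Main.v *)
Require Import Defs.
From HB Require Import structures.
From mathcomp Require Import all_boot all_order all_algebra.
From mathcomp Require Import zify lra.
Import Order.TTheory GRing.Theory Num.Theory.
Local Open Scope ring_scope.

Lemma anc_bound (R : realFieldType) (T : finType) (d : T -> T -> R)
  (itop : int) (Y : int -> {set T}) (par : int -> T -> T)
  (Hd : is_metric d) (HY : is_net_hierarchy d itop Y)
  (Hpar : is_parent_choice d itop Y par) (x : T) (n : nat) :
  Posz n <= itop ->
  ancn par n x \in Y (Posz n) /\ d (ancn par n x) x <= 2%:R ^+ n * 2%:R.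
Proof.
case: Hd => d0 dsym dtri _ _; case: HY => Y0 _ _ _.
elim: n => [|n IH] Hn /=.
  split; first by rewrite Y0 ?inE.
  have := (proj2 (d0 x x) erefl); move=> ->; rewrite expr0 mul1r; lra.
have Hn' : Posz n <= itop by lia.
case: (IH Hn') => Hin Hd'.
have e : Posz n.+1 - 1 = Posz n by lia.
have Hrange : 1 <= Posz n.+1 <= itop by apply/andP; split; lia.
have Hin' : ancn par n x \in Y (Posz n.+1 - 1) by rewrite e.
case: (Hpar _ Hrange _ Hin') => Hp Hpd _.
split => //.
have Hpd' : d (par (Posz n.+1) (ancn par n x)) (ancn par n x) <= 2%:R ^+ n.+1 by [].
apply: le_trans (dtri _ (ancn par n x) _) _.
rewrite exprS in Hpd' *; lra.
Qed.

Theorem mainTheorem6 (R : realFieldType) (T : finType) (d : T -> T -> R)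
  (itop : int) (Y : int -> {set T}) (par : int -> T -> T)
  (Hd : is_metric d) (Htop : is_itop d itop)
  (HY : is_net_hierarchy d itop Y) (Hpar : is_parent_choice d itop Y par)
  (Q : {set T}) (y : T) (i : int) (a : T) :
  Q != set0 -> y \in Q ->
  0 < radius d Q y ->
  pow2 (i - 1) < radius d Q y <= pow2 i ->
  (forall z : T, radius d Q a <= radius d Q z) ->
  ancestor par (i - 1) a \in Lset d Y (ancestor par i y) i 6%:R.
Proof.
move=> _ yQ _ /andP[Hlo Hhi] Hmin.
have Hd' := Hd; case: Hd' => d0 dsym dtri _ _.
have HY' := HY; case: HY' => Y0 _ _ _.
have dya : d y a <= radius d Q y.
  rewrite dsym; apply: le_trans (Hmin y).
  exact: (le_bigmax_cond _ (P := mem Q) (fun q => d a q) yQ).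
have rdiam : radius d Q y <= diam d.
  apply/bigmax_leP; split.
    apply: le_trans (le_bigmax _ (fun x => \big[Num.max/0]_(y0 : T) d x y0) y).
    apply: le_trans (le_bigmax _ (fun y0 => d y y0) y).
    by rewrite (proj2 (d0 y y) erefl).
  move=> q _.
  apply: le_trans (le_bigmax _ (fun x => \big[Num.max/0]_(y0 : T) d x y0) y).
  exact: (le_bigmax _ (fun y0 => d y y0) q).
have pgt : 0 < pow2 i :> R by rewrite /pow2; apply: exprz_gt0; lra.
case: i Hlo Hhi pgt => [[|n]|n] Hlo Hhi pgt.
- rewrite /ancestor /= /Lset inE Y0; last by lia.
  rewrite inE /=.
  move: (pow2 _) pgt Hhi => p pgt Hhi; clear -pgt Hhi dya; lra.
- have Hit : Posz n.+1 <= itop.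
    move: Htop => /andP[_ Htop].
    have : pow2 (Posz n.+1 - 1) < pow2 itop :> R by apply: lt_le_trans Htop; apply: lt_le_trans rdiam.
    rewrite /pow2 ltr_eXz2l; last by lra.
    lia.
  have e : Posz n.+1 - 1 = Posz n by lia.
  rewrite e /ancestor /=.
  idtac.
  rewrite /Lset inE.
  have [Ha1 Ha2] := @anc_bound R T d itop Y par Hd HY Hpar a n ltac:(lia).
  have [_ Hy2] := @anc_bound R T d itop Y par Hd HY Hpar y n.+1 Hit.
  idtac.
  rewrite e Ha1 /=.
  change (par n.+1 (ancn par n y)) with (ancn par n.+1 y).
  have Hp : pow2 (Posz n.+1) = 2%:R ^+ n.+1 :> R by [].
  rewrite Hp in Hhi *.
  apply: le_trans (dtri _ y _) _.
  have H2 := dtri y a (ancn par n a).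
  rewrite (dsym a) in H2.
  rewrite exprS in Hhi Hy2 *.
  have P0 : 0 <= 2%:R ^+ n :> R by apply: exprn_ge0.
  move: (2%:R ^+ n) P0 Hhi Hy2 H2 Ha2 dya => P P0 Hhi Hy2 H2 Ha2 dya.
  move: (d (ancn par n.+1 y) y) (d y (ancn par n a)) (d (ancn par n a) a) (d y a) (radius d Q y) Hhi Hy2 H2 Ha2 dya
   => u v w z r.
  clear -P0; move=> *.
  lra.
- rewrite /ancestor /= /Lset inE Y0; last by lia.
  rewrite inE /=.
  move: (pow2 _) pgt Hhi => p pgt Hhi; clear -pgt Hhi dya; lra.
Qed.
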